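(* Let $\hat U_1$ and $\hat U_2$ be real balanced four-splitters with four-splitter matrices $\mathbf R_1$ and $\mathbf R_2$, respectively. Then $\mathbf R_1$ can be transformed into $\mathbf R_2$ by some sequence of row permutations, row negations, and negation of any single column. (Equivalently: let $\mathbf R_1,\mathbf R_2\in\mathrm{O}(4)$ be real orthogonal $4\times 4$ matrices all of whose entries have absolute value $\tfrac12$; then for any fixed column index $c\in\{1,2,3,4\}$, $\mathbf R_2$ can be obtained from $\mathbf R_1$ by a finite sequence of operations each of which is a permutation of the rows, a negation of one row, or a negation of column $c$.)
   Context: For $N$ bosonic modes with annihilation operators $\hat{\mathbf a}=(\hat a_1,\dots,\hat a_N)^T$, a passive linear-optical unitary $\hat U$ is associated with the matrix $\mathbf U\in\mathrm U(N)$ defined by $\hat U^\dagger \hat{\mathbf a}\hat U=\mathbf U\hat{\mathbf a}$. $\hat U$ is a balanced $n$-splitter ($n=N$) if all entries of $\mathbf U$ have the same magnitude; $\mathbf U$ is its $n$-splitter matrix. It is a real balanced $n$-splitter if $\mathbf U\in\mathrm O(n)$ (all entries real). For $n=4$, all entries of a real balanced four-splitter matrix are therefore $\pm\tfrac12$. *)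

(* Defs.v *)
From mathcomp Require Import all_boot all_order all_algebra all_fingroup.
From Stdlib Require Import Relations.
Set Implicit Arguments. Unset Strict Implicit. Unset Printing Implicit Defensive.
Import Order.TTheory GRing.Theory Num.Theory.
Local Open Scope ring_scope.

Definition orthogonal_mx (R : realFieldType) (n : nat) (M : 'M[R]_n) : Prop :=
  M *m M^T = 1%:M.

Definition real_balanced_splitter (R : realFieldType) (n : nat) (M : 'M[R]_n) : Prop :=
  orthogonal_mx M /\ forall i j k l, `|M i j| = `|M k l|.

Definition neg_row (R : realFieldType) (n : nat) (i : 'I_n) (A : 'M[R]_n) : 'M[R]_n :=
  \matrix_(k, j) (if k == i then - A k j else A k j).

Definition neg_col (R : realFieldType) (n : nat) (c : 'I_n) (A : 'M[R]_n) : 'M[R]_n :=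
  \matrix_(k, j) (if j == c then - A k j else A k j).

Definition allowed_step (R : realFieldType) (n : nat) (c : 'I_n) (A B : 'M[R]_n) : Prop :=
  (exists s : 'S_n, B = row_perm s A)
  \/ (exists i : 'I_n, B = neg_row i A)
  \/ B = neg_col c A.

Definition reachable (R : realFieldType) (n : nat) (c : 'I_n) : relation 'M[R]_n :=
  clos_refl_trans _ (@allowed_step R n c).

(* Main.v *)
Require Import Defs.
From mathcomp Require Import all_boot all_order all_algebra all_fingroup.
From Stdlib Require Import Relations.
From mathcomp Require Import ring lra.
Set Implicit Arguments. Unset Strict Implicit. Unset Printing Implicit Defensive.
Import Order.TTheory GRing.Theory Num.Theory.
Local Open Scope ring_scope.

Definition o0 : 'I_4 := @Ordinal 4 0 isT.
Definition o1 : 'I_4 := @Ordinal 4 1 isT.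
Definition o2 : 'I_4 := @Ordinal 4 2 isT.
Definition o3 : 'I_4 := @Ordinal 4 3 isT.

Lemma ord4_cases (c : 'I_4) : [\/ c = o0, c = o1, c = o2 | c = o3].
Proof.
case: c => [[|[|[|[|//]]]] Hc].
- by apply: Or41; apply: val_inj.
- by apply: Or42; apply: val_inj.
- by apply: Or43; apply: val_inj.
- by apply: Or44; apply: val_inj.
Qed.

Definition Sg (c : 'I_4) := [set x : {ffun 'I_4 -> bool} | x c && ~~ (x o0 (+) x o1 (+) x o2 (+) x o3)].

Lemma key_inj (c d1 d2 : 'I_4) (x y : {ffun 'I_4 -> bool}) :
  [/\ c != d1, c != d2 & d1 != d2] ->
  x \in Sg c -> y \in Sg c -> x d1 = y d1 -> x d2 = y d2 -> x = y.
Proof.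
move=> [] H1 H2 H3; rewrite !inE => /andP[xc xp] /andP[yc yp] e1 e2.
apply/ffunP => k.
move: xc xp yc yp e1 e2 H1 H2 H3;
 have [->|->|->|->] := ord4_cases c; have [->|->|->|->] := ord4_cases d1;
 have [->|->|->|->] := ord4_cases d2; rewrite //= => xc xp yc yp e1 e2 _ _ _;
 have [->|->|->|->] := ord4_cases k; try by [rewrite xc yc | rewrite e1 | rewrite e2];
 move: xc xp yc yp e1 e2;
 by case: (x o0); case: (x o1); case: (x o2); case: (x o3);
    case: (y o0); case: (y o1); case: (y o2); case: (y o3).
Qed.

Lemma card_Sg c : (#|Sg c| <= 4)%N.
Proof.
have [d1 [d2 H]] : exists d1 d2 : 'I_4, [/\ c != d1, c != d2 & d1 != d2].
  by have [->|->|->|->] := ord4_cases c; [exists o1, o2|exists o0, o2|exists o0, o1|exists o0, o1].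
rewrite -(@card_in_imset _ _ (fun x : {ffun 'I_4 -> bool} => (x d1, x d2))).
  apply: leq_trans (max_card _) _.
  by rewrite card_prod card_bool.
move=> x y xS yS [e1 e2]; exact: key_inj xS yS e1 e2.
Qed.

Section Real.
Variable R : realFieldType.
Implicit Types (A B M N : 'M[R]_4).

Definition hf (x : R) := x = 1/2 \/ x = -(1/2).

Definition PP M := (forall i j, hf (M i j)) /\
  (forall i j, i != j -> \sum_k M i k * M j k = 0).

Lemma sum4 (F : 'I_4 -> R) : \sum_k F k = F o0 + F o1 + F o2 + F o3.
Proof.
rewrite !big_ord_recl big_ord0 addr0 !addrA.
by congr (F _ + F _ + F _ + F _); apply: val_inj.
Qed.

Lemma prod4 (F : 'I_4 -> R) : \prod_k F k = F o0 * F o1 * F o2 * F o3.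
Proof.
rewrite !big_ord_recl big_ord0 mulr1 !mulrA.
by congr (F _ * F _ * F _ * F _); apply: val_inj.
Qed.

Lemma balanced_PP M : real_balanced_splitter M -> PP M.
Proof.
move=> [orth ab]; rewrite /orthogonal_mx in orth.
have dot i j : \sum_k M i k * M j k = (i == j)%:R.
  by move/matrixP: orth => /(_ i j); rewrite !mxE => <-; apply: eq_bigr => k _; rewrite !mxE.
split=> //; last by move=> i j /negbTE ij; rewrite dot ij.
pose a := `|M o0 o0|.
have sq i j : M i j * M i j = a ^+ 2 by rewrite /a -(ab i j o0 o0) real_normK ?num_real // expr2.
have ha : a = 1/2.
  have := dot o0 o0; rewrite eqxx sum4 !sq => h.
  have : 0 <= a by apply: normr_ge0.
  move: h; rewrite expr2 /= => h ha0.
  have h2 : (a - 1/2) * (a + 1/2) = 0 by rewrite -[LHS]/(_ : R); lra.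
  move: h2 => /eqP; rewrite mulf_eq0 => /orP[]/eqP; lra.
move=> i j; have := ab i j o0 o0; rewrite -/a ha.
case: (lerP 0 (M i j)) => h.
  by rewrite ger0_norm // => ->; left.
by rewrite ltr0_norm // => e; right; rewrite -e opprK.
Qed.
Lemma L1 (x0 x1 x2 x3 y0 y1 y2 y3 : R) : hf x0 -> hf x1 -> hf x2 -> hf x3 ->
  hf y0 -> hf y1 -> hf y2 -> hf y3 ->
  x0*y0+x1*y1+x2*y2+x3*y3 = 0 -> x0*x1*x2*x3 = y0*y1*y2*y3.
Proof.
move=> h0 h1 h2 h3 [->|->] [->|->] [->|->] [->|->];
move: h0 h1 h2 h3 => [->|->] [->|->] [->|->] [->|->]; lra.
Qed.

Lemma hfN x : hf x -> hf (- x).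
Proof. by case=> ->; [right | left; rewrite opprK]. Qed.

Lemma hf_sq x : hf x -> x * x = 1/4.
Proof. by case=> ->; lra. Qed.

Lemma L2 (x0 x1 x2 x3 : R) : hf x0 -> hf x1 -> hf x2 -> hf x3 ->
  x0*x1*x2*x3 = 1/16 \/ x0*x1*x2*x3 = -(1/16).
Proof.
by move=> [->|->] [->|->] [->|->] [->|->]; first [left; lra | right; lra].
Qed.

Lemma L3 (b0 b1 b2 b3 : bool) :
  (if b0 then 1/2 else -(1/2)) * (if b1 then 1/2 else -(1/2)) *
  (if b2 then 1/2 else -(1/2)) * (if b3 then 1/2 else -(1/2))
  = if b0 (+) b1 (+) b2 (+) b3 then -(1/16) else 1/16 :> R.
Proof. by case: b0; case: b1; case: b2; case: b3 => /=; lra. Qed.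

Lemma PP_prod_eq M i j : PP M -> \prod_k M i k = \prod_k M j k.
Proof.
move=> [E O]; case: (eqVneq i j) => [-> //|ne].
have := O i j ne; rewrite sum4 !prod4; apply: L1; exact: E.
Qed.

Lemma step_sym c A B : allowed_step c A B -> allowed_step c B A.
Proof.
case=> [[s ->]|[[i ->]| ->]].
- left; exists (s^-1)%g; apply/matrixP => i j; rewrite !mxE permKV //.
- right; left; exists i; apply/matrixP => k j; rewrite /neg_row !mxE.
  by case: (k == i); rewrite ?opprK.
- right; right; apply/matrixP => k j; rewrite /neg_col !mxE.
  by case: (j == c); rewrite ?opprK.
Qed.

Lemma reach_sym c A B : reachable c A B -> reachable c B A.
Proof.
rewrite /reachable => H; elim: H.
- by move=> x y /step_sym H; apply: rt_step.
- by move=> x; apply: rt_refl.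
- by move=> x y z _ IH1 _ IH2; apply: rt_trans IH2 IH1.
Qed.

Lemma reach_negset c A (S : {set 'I_4}) :
  reachable c A (\matrix_(i, j) if i \in S then - A i j else A i j).
Proof.
move: {2}#|S| (erefl #|S|) => n; elim: n S => [|n IH] S cS.
  have -> : \matrix_(i, j) (if i \in S then - A i j else A i j) = A.
    by apply/matrixP => i j; rewrite mxE (cards0_eq cS) inE.
  exact: rt_refl.
have [x xS] : exists x, x \in S by apply/card_gt0P; rewrite cS.
have h : #|S :\ x| = n by move: cS; rewrite (cardsD1 x S) xS add1n => [[]].
apply: rt_trans; first exact: (IH _ h).
apply: rt_step; right; left; exists x; apply/matrixP => i j.
rewrite /neg_row !mxE in_setD1; case: (eqVneq i x) => [->|ne] /=.
  by rewrite xS.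
by [].
Qed.

Definition g c A := \matrix_(i, j) if i \in [set k | A k c < 0] then - A i j else A i j.

Lemma PP_g c A : PP A -> PP (g c A).
Proof.
move=> [E O]; split.
  move=> i j; rewrite mxE; case: (_ \in _) => //; exact: hfN.
move=> i j ne.
have -> : \sum_k g c A i k * g c A j k =
  (if A i c < 0 then -1 else 1) * (if A j c < 0 then -1 else 1) * \sum_k A i k * A j k.
  rewrite mulr_sumr; apply: eq_bigr => k _; rewrite !mxE !inE.
  by case: (A i c < 0); case: (A j c < 0) => /=; ring.
by rewrite O // mulr0.
Qed.

Lemma g_c c A i : PP A -> g c A i c = 1/2.
Proof.
move=> [E _]; rewrite mxE inE; case: (E i c) => ->; case: ltrP => h; lra.
Qed.

Lemma prod_g c A i : \prod_k g c A i k = \prod_k A i k.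
Proof. rewrite !prod4 !mxE !inE; case: (_ < 0) => //; ring. Qed.

Lemma prod_negcol c A i : \prod_k neg_col c A i k = - \prod_k A i k.
Proof.
rewrite (bigD1 c) //= [in RHS](bigD1 c) //= mxE eqxx mulNr; congr (- (_ * _)).
by apply: eq_bigr => k /negbTE ne; rewrite mxE ne.
Qed.

Lemma PP_negcol c A : PP A -> PP (neg_col c A).
Proof.
move=> [E O]; split.
  move=> i j; rewrite mxE; case: (j == c) => //; exact: hfN.
move=> i j ne; apply: eq_trans (O i j ne); apply: eq_bigr => k _; rewrite !mxE.
by case: (k == c); rewrite ?mulrNN.
Qed.

Definition vv A i : {ffun 'I_4 -> bool} := [ffun j => 0 < A i j].

Lemma vv_rep A i j : PP A -> A i j = if vv A i j then 1/2 else -(1/2).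
Proof. move=> [E _]; rewrite ffunE; case: (E i j) => ->; case: ltrP => h; lra. Qed.

Definition good c N := [/\ PP N, (forall i, N i c = 1/2) & (forall i, \prod_k N i k = 1/16)].

Lemma to_good c M : PP M -> exists N, reachable c M N /\ good c N.
Proof.
move=> PM.
pose A := if \prod_k M o0 k == 1/16 then M else neg_col c M.
have PA : PP A by rewrite /A; case: eqP => _ //; exact: PP_negcol.
have rMA : reachable c M A.
  rewrite /A; case: eqP => _; first exact: rt_refl.
  by apply: rt_step; right; right.
have pA : \prod_k A o0 k = 1/16.
  rewrite /A; case: eqP => // ne; rewrite prod_negcol.
  case: PM => E _; have := L2 (E o0 o0) (E o0 o1) (E o0 o2) (E o0 o3).
  by rewrite -prod4 => -[//|->]; rewrite opprK.
exists (g c A); split; first exact: rt_trans rMA (reach_negset _ _ _).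
split; first exact: PP_g.
  by move=> i; apply: g_c.
by move=> i; rewrite prod_g (PP_prod_eq i o0 PA).
Qed.

Lemma vS c N i : good c N -> vv N i \in Sg c.
Proof.
move=> [PN Nc Np]; rewrite inE; apply/andP; split.
  by rewrite ffunE Nc; lra.
have := Np i.
rewrite (eq_bigr (fun k => if vv N i k then 1/2 else -(1/2))); last first.
  by move=> k _; apply: vv_rep.
rewrite prod4 L3.
move: (vv N i o0 (+) vv N i o1 (+) vv N i o2 (+) vv N i o3) => b.
by case: b => // h; exfalso; lra.
Qed.

Lemma vinj N : PP N -> injective (vv N).
Proof.
move=> PN i j e; apply/eqP; apply/negPn/negP => ne.
have := (PN.2 i j ne).
rewrite (eq_bigr (fun k => 1/4)); last first.
  move=> k _; rewrite [N j k](vv_rep _ _ PN) -e -(vv_rep _ _ PN).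
  by apply: hf_sq; exact: PN.1.
by rewrite sum4; lra.
Qed.

Lemma matching c N1 N2 : good c N1 -> good c N2 -> exists s, N2 = row_perm s N1.
Proof.
move=> g1 g2.
have P1 : PP N1 by case: g1.
have P2 : PP N2 by case: g2.
have sub : codom (vv N1) \subset Sg c.
  by apply/subsetP => x /codomP [i ->]; exact: vS.
have eqS : codom (vv N1) =i Sg c.
  apply/subset_cardP => //; apply/eqP.
  by rewrite eqn_leq subset_leq_card // (card_codom (vinj P1)) card_ord card_Sg.
have H i : vv N2 i \in codom (vv N1) by rewrite eqS; exact: vS.
pose f i := iinv (H i).
have f_inj : injective f.
  move=> i j e; apply: (vinj P2).
  by rewrite -(f_iinv (H i)) -(f_iinv (H j)) -/(f i) -/(f j) e.
exists (perm f_inj); apply/matrixP => i j.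
by rewrite mxE permE (vv_rep _ _ P2) (vv_rep _ _ P1) f_iinv.
Qed.
End Real.

Theorem theorem1 (R : realFieldType) (R1 R2 : 'M[R]_4) (c : 'I_4) :
  real_balanced_splitter R1 -> real_balanced_splitter R2 ->
  reachable c R1 R2.
Proof.
move=> /balanced_PP P1 /balanced_PP P2.
have [N1 [r1 g1]] := to_good c P1.
have [N2 [r2 g2]] := to_good c P2.
have [s e] := matching g1 g2.
apply: rt_trans r1 _; apply: rt_trans (reach_sym r2).
by apply: rt_step; left; exists s.
Qed.
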